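(* Let $\mathcal O_M\subseteq\mathcal O_L$ be a quadratic extension of Dedekind domains with fraction fields $M\subseteq L$, $L/M$ Galois with $\operatorname{Gal}(L/M)=\langle\sigma\rangle\cong{\mathbf Z}/2{\mathbf Z}$. Define $\mathrm{ATr}:\mathcal O_L\to\mathcal O_L$ by $\mathrm{ATr}(x)=x-x^\sigma$ and $\mathscr A=\mathrm{ATr}(\mathcal O_L)$. Then for every nonzero ideal $I\subseteq\mathcal O_M$, \[ \mathcal O_M+I\mathcal O_L=\{x\in\mathcal O_L\mid \mathrm{ATr}(x)\in I\mathscr A\}. \] Moreover $\mathscr A$ is a projective $\mathcal O_M$-module of rank $1$.
   Context: ''Quadratic extension of Dedekind domains'' means $\mathcal O_L$ is a Dedekind domain containing $\mathcal O_M$, finitely generated as an $\mathcal O_M$-module, with $[L:M]=2$. *)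

(* Defs.v *)
From HB Require Import structures.
From mathcomp Require Import all_boot all_order all_algebra all_field.
Set Implicit Arguments. Unset Strict Implicit. Unset Printing Implicit Defensive.
Import GRing.Theory.
Local Open Scope ring_scope.

Section Defs.
Variable K : fieldType.
Implicit Types (S J P : K -> Prop).

Definition is_subring S : Prop :=
  [/\ S 0, S 1, (forall x y, S x -> S y -> S (x - y)) &
      (forall x y, S x -> S y -> S (x * y))].

Definition is_ideal S J : Prop :=
  [/\ (forall x, J x -> S x), J 0,
      (forall x y, J x -> J y -> J (x + y)) &
      (forall r x, S r -> J x -> J (r * x))].

Definition fg_ideal S J : Prop :=
  exists (n : nat) (g : 'I_n -> K), (forall k, J (g k)) /\
    forall x, J x <-> exists c : 'I_n -> K, (forall k, S (c k)) /\
                        x = \sum_(k < n) c k * g k.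

Definition is_prime_ideal S P : Prop :=
  [/\ is_ideal S P, ~ P 1 &
      forall a b, S a -> S b -> P (a * b) -> P a \/ P b].

Definition is_maximal_ideal S P : Prop :=
  is_ideal S P /\ ~ P 1 /\
  forall J, is_ideal S J -> (forall x, P x -> J x) -> J 1 \/ (forall x, J x -> P x).

Definition in_frac_field S : K -> Prop :=
  fun x => exists a b, S a /\ S b /\ b != 0 /\ x = a / b.

Definition integral_over S (x : K) : Prop :=
  exists p : {poly K}, p \is monic /\ (forall i, S p`_i) /\ root p x.

(* Dedekind domain: Noetherian, integrally closed in its fraction field,
   every nonzero prime ideal is maximal. (A subring of a field is a domain.) *)
Definition is_dedekind S : Prop :=
  [/\ is_subring S,
      (forall J, is_ideal S J -> fg_ideal S J),
      (forall x, in_frac_field S x -> integral_over S x -> S x) &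
      (forall P, is_prime_ideal S P -> (exists x, P x /\ x != 0) ->
                 is_maximal_ideal S P)].

End Defs.

Section Ext.
Variables (M : fieldType) (L : fieldExtType M).

Definition prod_mod (I : M -> Prop) (B : L -> Prop) : L -> Prop :=
  fun y => exists (n : nat) (i : 'I_n -> M) (b : 'I_n -> L),
    (forall k, I (i k)) /\ (forall k, B (b k)) /\ y = \sum_(k < n) i k *: b k.

(* A (a subset of L, closed under O_M-operations) is a finitely generated
   projective O_M-module: a direct summand of some O_M^n, i.e. there are
   O_M-linear maps f : A -> O_M^n and g : O_M^n -> A with g \o f = id on A. *)
Definition fg_projective (OM : M -> Prop) (A : L -> Prop) : Prop :=
  exists (n : nat) (f : L -> 'I_n -> M) (g : ('I_n -> M) -> L),
  (forall x, A x -> forall k, OM (f x k)) /\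
  (forall v, (forall k, OM (v k)) -> A (g v)) /\
  (forall x y, A x -> A y -> f (x + y) = (fun k => f x k + f y k)) /\
  (forall c x, OM c -> A x -> f (c *: x) = (fun k => c * f x k)) /\
  (forall v w, (forall k, OM (v k)) -> (forall k, OM (w k)) ->
     g (fun k => v k + w k) = g v + g w) /\
  (forall c v, OM c -> (forall k, OM (v k)) ->
     g (fun k => c * v k) = c *: g v) /\
  (forall x, A x -> g (f x) = x).

(* rank 1 (for a torsion-free module A inside L): M (x)_{O_M} A = M.A is a
   one-dimensional M-vector space. *)
Definition rank_one (A : L -> Prop) : Prop :=
  exists a, A a /\ a != 0 /\ forall x, A x -> exists c : M, x = c *: a.

End Ext.

(* Main.v *)
Require Import Defs.
From HB Require Import structures.
From mathcomp Require Import all_boot all_order all_algebra all_field.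
From Stdlib Require Import Classical ClassicalEpsilon FunctionalExtensionality.
From Stdlib Require List.
From mathcomp Require Import ring.
Import GRing.Theory.
Local Open Scope ring_scope.

Section Ded.
Variable K : fieldType.
Variable R : K -> Prop.
Hypothesis HR : is_subring R.

Lemma R0 : R 0. Proof. by case: HR. Qed.
Lemma R1 : R 1. Proof. by case: HR. Qed.
Lemma RB x y : R x -> R y -> R (x - y). Proof. by case: HR => _ _ H _; apply: H. Qed.
Lemma RM x y : R x -> R y -> R (x * y). Proof. by case: HR => _ _ _ H; apply: H. Qed.
Lemma RN x : R x -> R (- x). Proof. by move=> Hx; rewrite -sub0r; apply: RB => //; apply: R0. Qed.
Lemma RD x y : R x -> R y -> R (x + y).
Proof. by move=> Hx Hy; rewrite -[y]opprK; apply: RB => //; apply: RN. Qed.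
Lemma RX x n : R x -> R (x ^+ n).
Proof. move=> Hx; elim: n => [|n IH]; first by rewrite expr0; apply: R1. by rewrite exprS; apply: RM. Qed.
Lemma Rsum (I : Type) (s : seq I) (P : pred I) F :
  (forall i, P i -> R (F i)) -> R (\sum_(i <- s | P i) F i).
Proof. by move=> H; apply: big_ind => //; [apply: R0 | apply: RD]. Qed.

Definition sub (A B : K -> Prop) := forall x, A x -> B x.

Section Id.
Variable J : K -> Prop.
Hypothesis HJ : is_ideal R J.
Lemma JR x : J x -> R x. Proof. by case: HJ => H _ _ _; apply: H. Qed.
Lemma J0 : J 0. Proof. by case: HJ. Qed.
Lemma JD x y : J x -> J y -> J (x + y). Proof. by case: HJ => _ _ H _; apply: H. Qed.
Lemma JM r x : R r -> J x -> J (r * x). Proof. by case: HJ => _ _ _ H; apply: H. Qed.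
Lemma JMr r x : R r -> J x -> J (x * r). Proof. by move=> *; rewrite mulrC; apply: JM. Qed.
Lemma Jsum (I : Type) (s : seq I) (P : pred I) F :
  (forall i, P i -> J (F i)) -> J (\sum_(i <- s | P i) F i).
Proof. by move=> H; apply: big_ind => //; [apply: J0 | apply: JD]. Qed.
End Id.
Arguments JR {J}. Arguments J0 {J}. Arguments JD {J}. Arguments JM {J}. Arguments JMr {J}. Arguments Jsum {J}.

Hypothesis Hnoeth : forall J, is_ideal R J -> fg_ideal R J.

Lemma seq_common (T : eqType) (s : seq T) (P : T -> nat -> Prop) :
  (forall t N M, (N <= M)%N -> P t N -> P t M) ->
  (forall t, t \in s -> exists N, P t N) -> exists N, forall t, t \in s -> P t N.
Proof.
move=> Hm; elim: s => [|a s IH] H; first by exists 0%N.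
have [N1 H1] := H a (mem_head _ _).
have [N2 H2] : exists N, forall t, t \in s -> P t N.
  by apply: IH => t ts; apply: H; rewrite in_cons ts orbT.
exists (maxn N1 N2) => t; rewrite in_cons => /orP [/eqP -> | ts].
  by apply: Hm (leq_maxl _ _) H1.
by apply: Hm (leq_maxr _ _) (H2 _ ts).
Qed.

Lemma noeth_max (F : (K -> Prop) -> Prop) a0 :
  F a0 -> (forall a, F a -> is_ideal R a) ->
  exists m, F m /\ forall b, F b -> sub m b -> sub b m.
Proof.
move=> Fa0 Fid; apply: NNPP => Hno.
have Hnext : forall m : {a | F a}, {b : {a | F a} | sub (sval m) (sval b) /\ ~ sub (sval b) (sval m)}.
  move=> [m Fm]; apply: constructive_indefinite_description.
  apply: NNPP => H2; apply: Hno; exists m; split => // b Fb smb.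
  apply: NNPP => nb; apply: H2; by exists (exist _ b Fb).
pose next m := sval (Hnext m).
pose ch := fix ch n := if n is n'.+1 then next (ch n') else exist _ a0 Fa0.
have chS n : sub (sval (ch n)) (sval (ch n.+1)) /\ ~ sub (sval (ch n.+1)) (sval (ch n)).
  by rewrite /=; exact: (svalP (Hnext (ch n))).
have chM n m : (n <= m)%N -> sub (sval (ch n)) (sval (ch m)).
  elim: m => [|m IH]; first by rewrite leqn0 => /eqP ->.
  rewrite leq_eqVlt => /orP [/eqP -> //| ]; rewrite ltnS => /IH H x /H.
  by apply: (chS m).1.
have chI n : is_ideal R (sval (ch n)) by apply: Fid; apply: svalP.
pose U x := exists n, sval (ch n) x.
have UI : is_ideal R U.
  split.
  - by move=> x [n Hn]; apply: JR (chI n) _ Hn.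
  - by exists 0%N; apply: J0 (chI 0%N).
  - move=> x y [n Hx] [m Hy]; exists (maxn n m); apply: (JD (chI (maxn n m))).
      exact: chM (leq_maxl _ _) _ Hx.
    exact: chM (leq_maxr _ _) _ Hy.
  - by move=> r x Hr [n Hx]; exists n; apply: JM (chI _) _ _ Hr Hx.
have [n [g [Hg Hgen]]] := Hnoeth _ UI.
have [N HN] : exists N, forall k, k \in enum 'I_n -> sval (ch N) (g k).
  apply: seq_common => [k N M le|k _]; first exact: chM.
  exact: Hg.
have UN : sub U (sval (ch N)).
  move=> x /Hgen [c [Hc ->]]; apply: (Jsum (chI N)) => k _.
  apply: (JM (chI N)) (Hc k) _; apply: HN; exact: mem_enum.
apply: (chS N).2 => x Hx; apply: UN; by exists N.+1.
Qed.

Hypothesis Hic : forall x, in_frac_field R x -> integral_over R x -> R x.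
Hypothesis Hff : forall x, in_frac_field R x.

Lemma almost_int x d : d != 0 -> (forall n, R (d * x ^+ n)) -> R x.
Proof.
move=> d0 Hd.
pose J y := exists p : {poly K}, (forall i, R p`_i) /\ y = d * p.[x].
have JI : is_ideal R J.
  split.
  - move=> y [p [Hp ->]]; rewrite horner_coef mulr_sumr; apply: Rsum => i _.
    by rewrite mulrCA; apply: RM.
  - by exists 0; split => [i|]; rewrite ?coef0 ?horner0 ?mulr0 //; apply: R0.
  - move=> y z [p [Hp ->]] [q [Hq ->]]; exists (p + q); split.
      by move=> i; rewrite coefD; apply: RD.
    by rewrite hornerD mulrDr.
  - move=> r y Hr [p [Hp ->]]; exists (r *: p); split.
      by move=> i; rewrite coefZ; apply: RM.
    by rewrite hornerZ mulrCA.
have [n [g [Hg Hgen]]] := Hnoeth _ JI.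
have [p Hp] := fin_all_exists Hg.
pose N := (\max_k size (p k))%N.
have : J (d * x ^+ N).
  exists 'X^N; split; last by rewrite hornerXn.
  by move=> i; rewrite coefXn; case: (i == N); [apply: R1 | apply: R0].
move/Hgen => [c [Hc Heq]].
pose q := \sum_k c k *: p k.
have Hq : x ^+ N = q.[x].
  apply: (mulfI d0); rewrite Heq /q horner_sum mulr_sumr; apply: eq_bigr => k _.
  by rewrite (proj2 (Hp k)) hornerZ mulrCA.
have sq : (size q <= N)%N.
  apply: leq_trans (size_sum _ _ _) _; apply/bigmax_leqP => k _.
  apply: leq_trans (size_scale_leq _ _) _.
  by rewrite /N (bigD1 k) //= leq_maxl.
apply: Hic; first exact: Hff.
exists ('X^N - q); split; [|split].
- rewrite monicE lead_coefDl ?lead_coefXn // size_polyXn size_opp ltnS //.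
- move=> i; rewrite coefB coefXn; apply: RB.
    by case: (i == N); [apply: R1 | apply: R0].
  rewrite /q coef_sum; apply: Rsum => k _; rewrite coefZ; apply: RM => //.
  exact: (proj1 (Hp k)).
- by rewrite /root hornerD hornerN hornerXn -Hq subrr.
Qed.

Hypothesis Hdim : forall P, is_prime_ideal R P -> (exists x, P x /\ x != 0) ->
  is_maximal_ideal R P.

Definition nz (J : K -> Prop) := exists x, J x /\ x != 0.

Fixpoint prodof (ps : seq (K -> Prop)) (u : K) : Prop :=
  if ps is p :: ps' then exists x y, p x /\ prodof ps' y /\ u = x * y else u = 1.

Lemma prodof_cat s t u :
  prodof (s ++ t) u <-> exists v w, prodof s v /\ prodof t w /\ u = v * w.
Proof.
elim: s u => [|p s IH] u /=.
  split; first by move=> H; exists 1, u; rewrite mul1r.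
  by move=> [v [w [-> [H ->]]]]; rewrite mul1r.
split.
  move=> [x [y [px [/IH [v [w [sv [tw ->]]]] ->]]]].
  exists (x * v), w; split; first by exists x, v.
  by split=> //; rewrite mulrA.
move=> [v [w [[x [y [px [sy ->]]]] [tw ->]]]].
exists x, (y * w); split=>//; split; last by rewrite mulrA.
by apply/IH; exists y, w.
Qed.

Lemma prodof_R ps u : List.Forall (is_maximal_ideal R) ps -> prodof ps u -> R u.
Proof.
elim: ps u => [|p ps IH] u /=; first by move=> _ ->; apply: R1.
move=> /List.Forall_cons_iff [[Hp _] Hps] [x [y [px [Hy ->]]]].
apply: RM; [exact: JR Hp _ px | exact: IH _ Hps Hy].
Qed.

Definition ext (m : K -> Prop) b := fun y => exists z r, m z /\ R r /\ y = z + r * b.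

Lemma ext_ideal m b : is_ideal R m -> R b -> is_ideal R (ext m b).
Proof.
move=> Hm Rb; split.
- move=> y [z [r [pz [Rr ->]]]]; apply: RD; [exact: JR Hm _ pz | exact: RM].
- exists 0, 0; split; [exact: J0 Hm | split; [exact: R0 | by rewrite mul0r addr0]].
- move=> y y' [z [r [pz [Rr ->]]]] [z' [r' [pz' [Rr' ->]]]].
  exists (z + z'), (r + r'); split; [exact: (JD Hm _ _ pz pz') | split; [exact: RD | ]].
  by rewrite mulrDl addrACA.
- move=> s y Rs [z [r [pz [Rr ->]]]]; exists (s * z), (s * r).
  split; [exact: (JM Hm _ _ Rs pz) | split; [exact: RM|]].
  by rewrite mulrDr mulrA.
Qed.

Lemma ext_sub m b : is_ideal R m -> sub m (ext m b).
Proof. by move=> Hm x mx; exists x, 0; split=>//; split; [apply: R0 | rewrite mul0r addr0]. Qed.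

Lemma ext_b m b : is_ideal R m -> ext m b b.
Proof. by move=> Hm; exists 0, 1; split; [exact: J0 Hm | split; [apply: R1 | rewrite mul1r add0r]]. Qed.

Lemma max_prime p : is_maximal_ideal R p -> is_prime_ideal R p.
Proof.
move=> [Hp [p1 Hmax]]; split=> // a b Ra Rb Hab.
apply: NNPP => /not_or_and [na nb].
have [J1|Jp] := Hmax _ (@ext_ideal p a Hp Ra) (@ext_sub p a Hp).
  move: J1 => [z [r [pz [Rr E]]]]; apply: nb.
  have -> : b = b * z + r * (a * b) by rewrite -[b in LHS]mulr1 E; ring.
  apply: (JD Hp); [exact: (JM Hp _ _ Rb pz) | exact: (JM Hp _ _ Rr Hab)].
by apply: na; apply: Jp; apply: ext_b.
Qed.

Lemma exists_max a : is_ideal R a -> ~ a 1 -> exists p, is_maximal_ideal R p /\ sub a p.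
Proof.
move=> Ha a1.
have [m [[Hm m1 am] Hmax]] := @noeth_max (fun b => [/\ is_ideal R b, ~ b 1 & sub a b]) a
   (And3 Ha a1 (fun x h => h)) (fun b '(And3 H _ _) => H).
exists m; split=> //; split=> //; split=> // J HJ mJ.
case: (classic (J 1)) => J1; [by left | right].
apply: Hmax => //; split=> // x /am; exact: mJ.
Qed.

Lemma contains_prod a : is_ideal R a -> nz a ->
  exists ps, List.Forall (is_maximal_ideal R) ps /\ sub (prodof ps) a.
Proof.
move=> Ha nza; apply: NNPP => H.
have [m [[Hm nzm Hm3] Hmax]] := @noeth_max
   (fun b => [/\ is_ideal R b, nz b & ~ exists ps, List.Forall (is_maximal_ideal R) ps /\ sub (prodof ps) b]) a
   (And3 Ha nza H) (fun b '(And3 H _ _) => H).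
apply: Hm3.
case: (classic (m 1)) => m1.
  by exists [::]; split; [constructor | move=> u /= ->].
case: (classic (is_prime_ideal R m)) => mp.
  exists [:: m]; split; first by constructor; [exact: Hdim | constructor].
  by move=> u /= [x [y [mx [-> ->]]]]; rewrite mulr1.
have [b1 [b2 [Rb1 [Rb2 [mb [nb1 nb2]]]]]] :
    exists b1 b2, R b1 /\ R b2 /\ m (b1 * b2) /\ ~ m b1 /\ ~ m b2.
  apply: NNPP => H'; apply: mp; split => // x y Rx Ry mxy.
  apply: NNPP => /not_or_and [nx ny]; apply: H'; by exists x, y.
have getps b : R b -> ~ m b ->
    exists ps, List.Forall (is_maximal_ideal R) ps /\ sub (prodof ps) (ext m b).
  move=> Rb nb; apply: NNPP => H'; apply: nb.
  apply: (Hmax (ext m b)); last exact: ext_b.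
    split; [exact: ext_ideal | | exact: H'].
    by move: nzm => [x [mx x0]]; exists x; split=> //; apply: ext_sub.
  exact: ext_sub.
have [ps1 [F1 S1]] := getps _ Rb1 nb1.
have [ps2 [F2 S2]] := getps _ Rb2 nb2.
exists (ps1 ++ ps2); split; first by apply/List.Forall_app.
move=> u /prodof_cat [v [w [pv [pw ->]]]].
move: (S1 _ pv) (S2 _ pw) => [z1 [r1 [mz1 [Rr1 ->]]]].
move=> [z2 [r2 [mz2 [Rr2 E2]]]].
have Rw : R (z2 + r2 * b2) by apply: RD; [exact: JR Hm _ mz2 | exact: RM].
rewrite E2.
have -> : (z1 + r1 * b1) * (z2 + r2 * b2) =
    (z2 + r2 * b2) * z1 + (r1 * b1) * z2 + (r1 * r2) * (b1 * b2) by ring.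
apply: (JD Hm); [apply: (JD Hm) |].
- exact: JM Hm _ _ Rw mz1.
- by apply: JM Hm _ _ _ mz2; apply: RM.
- by apply: JM Hm _ _ _ mb; apply: RM.
Qed.

Lemma ex_min_nat (P : nat -> Prop) :
  (exists n, P n) -> exists n, P n /\ forall m, (m < n)%N -> ~ P m.
Proof.
move=> [n Pn]; apply: NNPP => H.
suff: forall k m, (m <= k)%N -> ~ P m by move/(_ n n (leqnn n)).
elim=> [|k IH] m.
  rewrite leqn0 => /eqP -> P0; apply: H; exists 0%N; split=> //.
rewrite leq_eqVlt => /orP [/eqP -> Pk|]; last by rewrite ltnS; apply: IH.
apply: H; exists k.+1; split=> // m'; rewrite ltnS; exact: IH.
Qed.

Lemma find_fac (q : K -> Prop) ps : is_prime_ideal R q ->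
  List.Forall (is_maximal_ideal R) ps -> sub (prodof ps) q ->
  exists s1 p s2, ps = s1 ++ p :: s2 /\ sub p q.
Proof.
move=> [Hq q1 Hqp]; elim: ps => [|p ps IH] /=.
  by move=> _ H; case: q1; apply: H.
move=> /List.Forall_cons_iff [Mp Fps] Hs.
case: (classic (sub p q)) => Hpq; first by exists [::], p, ps.
have [x [px nqx]] : exists x, p x /\ ~ q x.
  apply: NNPP => H; apply: Hpq => x px; apply: NNPP => nq; apply: H; by exists x.
have : sub (prodof ps) q.
  move=> y Hy.
  have : q (x * y) by apply: Hs; exists x, y.
  case/Hqp; [exact: (JR (proj1 Mp) _ px) | exact: (prodof_R _ _ Fps Hy) | by [] | by []].
move/(IH Fps) => [s1 [p' [s2 [-> H]]]].
by exists (p :: s1), p', s2.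
Qed.

Lemma inv_nontriv p : is_maximal_ideal R p -> nz p ->
  exists x, ~ R x /\ forall y, p y -> R (x * y).
Proof.
move=> Mp [a [pa a0]].
have pp := max_prime _ Mp.
have Ra : R a by apply: (JR (proj1 Mp)).
pose prin y := exists r, R r /\ y = r * a.
have prinI : is_ideal R prin.
  split.
  - by move=> y [r [Rr ->]]; apply: RM.
  - by exists 0; split; [apply: R0 | rewrite mul0r].
  - move=> y z [r [Rr ->]] [s [Rs ->]]; exists (r + s); split; [exact: RD | by rewrite mulrDl].
  - by move=> s y Rs [r [Rr ->]]; exists (s * r); split; [exact: RM | rewrite mulrA].
have prinnz : nz prin by exists a; split=> //; exists 1; split; [apply: R1 | rewrite mul1r].
have prinp : sub prin p by move=> y [r [Rr ->]]; exact: (JM (proj1 Mp)).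
have [ps0 [F0 S0]] := contains_prod _ prinI prinnz.
have [n [[ps [sz [Fps Sps]]] Hmin]] := @ex_min_nat
  (fun n => exists ps, size ps = n /\ List.Forall (is_maximal_ideal R) ps /\ sub (prodof ps) prin)
  (ex_intro _ (size ps0) (ex_intro _ ps0 (conj erefl (conj F0 S0)))).
have [s1 [p' [s2 [Eps Hp']]]] := find_fac _ _ pp Fps (fun u h => prinp _ (Sps u h)).
move: Fps; rewrite Eps => /List.Forall_app [F1 /List.Forall_cons_iff [Mp' F2]].
have Hpp' : sub p p'.
  case: Mp' => Ip' [_ Hm']; case: (Hm' p (proj1 Mp) Hp') => [p1|//].
  by case: Mp => _ [].
have [u [Hu nu]] : exists u, prodof (s1 ++ s2) u /\ ~ prin u.
  apply: NNPP => H; apply: (Hmin (size (s1 ++ s2))).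
    by rewrite -sz Eps !size_cat /= addnS.
  exists (s1 ++ s2); split=> //; split; first by apply/List.Forall_app.
  move=> u Hu; apply: NNPP => nu; apply: H; by exists u.
exists (u / a); split.
  by move=> Rx; apply: nu; exists (u / a); split=> //; rewrite divfK.
move=> y py.
move/prodof_cat: Hu => [v [w [Hv [Hw Euw]]]].
have : prin (y * u).
  apply: Sps; rewrite Eps; apply/prodof_cat; exists v, (y * w); split=> //; split.
    by exists y, w; split=> //; apply: Hpp'.
  by rewrite Euw; ring.
move=> [r [Rr Er]].
rewrite (_ : u / a * y = (y * u) / a); last by rewrite mulrC mulrA.
by rewrite Er mulfK.
Qed.

Definition Inv (a : K -> Prop) := exists s : seq (K * K),
  (forall t, t \in s -> a t.2 /\ forall y, a y -> R (t.1 * y)) /\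
  \sum_(t <- s) t.1 * t.2 = 1.

Lemma all_inv a : is_ideal R a -> nz a -> Inv a.
Proof.
move=> Ha nza; apply: NNPP => H.
have [m [[Hm nzm Hm3] Hmax]] := @noeth_max
   (fun b => [/\ is_ideal R b, nz b & ~ Inv b]) a
   (And3 Ha nza H) (fun b '(And3 H _ _) => H).
apply: Hm3.
case: (classic (m 1)) => m1.
  exists [:: (1, 1)]; split; last by rewrite big_cons big_nil mulr1 addr0.
  move=> t; rewrite inE => /eqP -> /=; split=> // y my; rewrite mul1r.
  exact: (JR Hm).
have [p [Mp mp]] := exists_max _ Hm m1.
have nzp : nz p by case: nzm => x [mx x0]; exists x; split=> //; apply: mp.
have [x [nRx Hx]] := inv_nontriv _ Mp nzp.
pose m' y := exists z w, m z /\ m w /\ y = z + x * w.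
have Rxw w : m w -> R (x * w) by move=> mw; apply: Hx; apply: mp.
have Hm' : is_ideal R m'.
  split.
  - move=> y [z [w [mz [mw ->]]]]; apply: RD; [exact: (JR Hm) | exact: Rxw].
  - by exists 0, 0; split; [exact: (J0 Hm) | split; [exact: (J0 Hm)| rewrite mulr0 addr0]].
  - move=> y y' [z [w [mz [mw ->]]]] [z' [w' [mz' [mw' ->]]]].
    exists (z + z'), (w + w'); split; [exact: (JD Hm) | split; [exact: (JD Hm) | ring]].
  - move=> r y Rr [z [w [mz [mw ->]]]]; exists (r * z), (r * w).
    split; [exact: (JM Hm) | split; [exact: (JM Hm) | ring]].
have mm' : sub m m' by move=> y my; exists y, 0; split=> //; split; [exact: (J0 Hm) | rewrite mulr0 addr0].
have Inv' : Inv m'.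
  apply: NNPP => nI; apply: nRx.
  have sm : sub m' m by apply: Hmax => //; split=> //; case: nzm => y [my y0]; exists y; split=> //; apply: mm'.
  case: nzm => d [md d0].
  apply: (@almost_int x d d0) => n.
  suff : m (x ^+ n * d) by rewrite mulrC; apply: (JR Hm).
  elim: n => [|n IH]; first by rewrite expr0 mul1r.
  apply: sm; exists 0, (x ^+ n * d); split; first exact: (J0 Hm).
  by split=> //; rewrite add0r exprS mulrA.
case: Inv' => s [Hs Hsum].
suff [t [Ht Htsum]] : exists t : seq (K * K),
    (forall e, e \in t -> m e.2 /\ forall y, m y -> R (e.1 * y)) /\
    \sum_(e <- t) e.1 * e.2 = \sum_(e <- s) e.1 * e.2.
  by exists t; split=> //; rewrite Htsum.
elim: s Hs {Hsum} => [|[u g] s IH] Hs; first by exists [::]; split.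
have [t [Ht Htsum]] : exists t : seq (K * K),
    (forall e, e \in t -> m e.2 /\ forall y, m y -> R (e.1 * y)) /\
    \sum_(e <- t) e.1 * e.2 = \sum_(e <- s) e.1 * e.2.
  by apply: IH => e es; apply: Hs; rewrite inE es orbT.
have [[z [w [mz [mw Eg]]]] Hu] := Hs (u, g) (mem_head _ _).
exists ((u, z) :: (u * x, w) :: t); split.
  move=> e; rewrite !inE => /orP [/eqP -> | /orP [/eqP -> | et]]; last exact: Ht.
    split=> // y my /=; apply: Hu; exact: mm'.
  split=> // y my /=; rewrite -mulrA; apply: Hu; exists 0, y; split; first exact: (J0 Hm).
  by split=> //; rewrite add0r.
rewrite !big_cons Htsum /=; move: Eg => /= ->; ring.
Qed.

Lemma common_den (s : seq K) : exists d, d != 0 /\ R d /\ forall x, x \in s -> R (d * x).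
Proof.
elim: s => [|a s [d [d0 [Rd Hd]]]]; first by exists 1; split; [exact: oner_neq0 | split; [exact: R1|]].
have [p [q [Rp [Rq [q0 ->]]]]] := Hff a.
exists (q * d); split; first by rewrite mulf_neq0.
split; first exact: RM.
move=> x; rewrite inE => /orP [/eqP -> | xs].
  rewrite (_ : q * d * (p / q) = d * p); first by apply: RM.
  by rewrite mulrC mulrA divfK // mulrC.
by rewrite -mulrA; apply: RM => //; apply: Hd.
Qed.

End Ded.
Arguments R0 {K R}. Arguments R1 {K R}. Arguments RB {K R}. Arguments RM {K R}.
Arguments RN {K R}. Arguments RD {K R}. Arguments RX {K R}. Arguments Rsum {K R}.
Arguments JR {K R J}. Arguments J0 {K R J}. Arguments JD {K R J}.
Arguments JM {K R J}. Arguments Jsum {K R J}.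

Section Ext.
Variables (M : fieldType) (L : fieldExtType M).

Lemma functional (v : L) : v != 0 -> exists phi : L -> M,
  [/\ (forall x y, phi (x + y) = phi x + phi y),
      (forall a x, phi (a *: x) = a * phi x) & phi v = 1].
Proof.
move=> v0.
pose X := vbasis (fullv : {vspace L}).
have Hv := coord_vbasis (memvf v).
have [i ci] : exists i, coord X i v != 0.
  apply: NNPP => H; case/negP: v0; apply/eqP; rewrite Hv big1 // => i _.
  have : coord X i v = 0 by apply: NNPP => H'; apply H; exists i; apply/eqP.
  by move->; rewrite scale0r.
exists (fun x => (coord X i v)^-1 * coord X i x); split.
- by move=> x y; rewrite linearD /= mulrDr.
- by move=> a x; rewrite linearZ /= mulrCA.
- by rewrite mulVf.
Qed.

Lemma algXn (c : M) n : (c ^+ n)%:A = (c%:A : L) ^+ n.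
Proof.
elim: n => [|n IH]; first by rewrite !expr0 scale1r.
by rewrite !exprS -IH -scalerA mulr_algl.
Qed.

End Ext.

Theorem proposition3p8 (M : fieldType) (L : fieldExtType M)
  (OM : M -> Prop) (OL : L -> Prop) (sigma : {rmorphism L -> L}) :
  is_dedekind OM -> (forall x, in_frac_field OM x) ->
  is_dedekind OL -> (forall x, in_frac_field OL x) ->
  (forall c, OM c -> OL (c%:A)) ->
  (exists (n : nat) (b : 'I_n -> L), (forall k, OL (b k)) /\
     forall x, OL x -> exists c : 'I_n -> M, (forall k, OM (c k)) /\
                         x = \sum_(k < n) c k *: b k) ->
  \dim {:L} = 2%N ->
  (forall c : M, sigma (c%:A) = c%:A) ->
  (exists x, sigma x != x) ->
  let ATr := fun x : L => x - sigma x in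
  let A := fun y : L => exists x, OL x /\ y = ATr x in
  (forall I : M -> Prop, is_ideal OM I -> (exists i, I i /\ i != 0) ->
     forall x : L,
       (exists a y, OM a /\ prod_mod I OL y /\ x = a%:A + y)
       <-> (OL x /\ prod_mod I A (ATr x)))
  /\ (fg_projective OM A /\ rank_one A).
Proof.
move=> [HMs HMn HMic HMd] HMf [HLs _ _ _] HLf HML [nb [b [Hb Hgen]]] Hdim2 Hsig [x0 Hx0] ATr A.
have sigZ c x : sigma (c *: x) = c *: sigma x by rewrite -[c *: x]mulr_algl -[c *: sigma x]mulr_algl rmorphM Hsig.
have ATrZ c x : ATr (c *: x) = c *: ATr x by rewrite /ATr sigZ scalerBr.
have ATrD x y : ATr (x + y) = ATr x + ATr y by rewrite /ATr rmorphD opprD addrACA.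
have ATr_sum n (e : 'I_n -> M) (w : 'I_n -> L) :
    ATr (\sum_k e k *: w k) = \sum_k e k *: ATr (w k).
  by rewrite /ATr rmorph_sum -sumrB; apply: eq_bigr => k _; rewrite sigZ scalerBr.
have ATrC c : ATr c%:A = 0 by rewrite /ATr Hsig subrr.
have OLZ c x : OM c -> OL x -> OL (c *: x) by move=> *; rewrite -mulr_algl; apply: (RM HLs) => //; apply: HML.
have OLsum n (e : 'I_n -> M) (w : 'I_n -> L) : (forall k, OM (e k)) -> (forall k, OL (w k)) ->
    OL (\sum_k e k *: w k).
  by move=> He Hw; apply: (Rsum HLs) => k _; apply: OLZ.
have [t0 [OLt0 Ht0]] : exists t, OL t /\ sigma t != t.
  have [p [q [OLp [OLq [q0 Ex]]]]] := HLf x0.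
  apply: NNPP => H; case/negP: Hx0; apply/eqP.
  have fix1 y : OL y -> sigma y = y.
    by move=> Hy; apply: NNPP => ne; apply: H; exists y; split=> //; apply/eqP.
  by rewrite Ex rmorphM fmorphV !fix1.
have t0n1 : t0 \notin <[1]>%VS.
  apply/negP => /vlineP [k Ek]; case/negP: Ht0; apply/eqP.
  by rewrite Ek Hsig.
have fr : free [:: t0; 1] by rewrite free_cons seq1_free oner_neq0 span_seq1 andbT.
have Hsp : <<[:: t0; 1%R]>>%VS = fullv.
  by apply/eqP; rewrite eqEdim subvf Hdim2 (eqP fr).
have dec y : exists al be, y = al%:A + be *: t0.
  move: (memvf y); rewrite -Hsp span_cons span_seq1.
  move=> /memv_addP [u /vlineP [be ->] [v /vlineP [al ->] ->]].
  by exists al, be; rewrite addrC.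
pose del := ATr t0.
have del0 : del != 0 by rewrite /del /ATr subr_eq0 eq_sym.
have ATr_del y : exists be, ATr y = be *: del.
  have [al [be ->]] := dec y; exists be.
  by rewrite ATrD ATrC add0r ATrZ.
have fixd y : sigma y = y -> exists c, y = c%:A.
  move=> Hy; have [al [be Ey]] := dec y; exists al.
  have : be *: del = 0.
    by rewrite /del -ATrZ -[ATr (be *: t0)]add0r -{1}(ATrC al) -ATrD -Ey /ATr Hy subrr.
  move/eqP; rewrite scaler_eq0 (negbTE del0) orbF => /eqP be0.
  by rewrite Ey be0 scale0r addr0.
have [phi1 [phi1D phi1Z phi11]] := @functional M L 1 (oner_neq0 L).
have phi1_0 : phi1 0 = 0 by have := phi1Z 0 0; rewrite scale0r mul0r.
have phi1_sum n (e : 'I_n -> M) w : phi1 (\sum_k e k *: w k) = \sum_k e k * phi1 (w k).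
  rewrite (big_morph phi1 phi1D phi1_0); apply: eq_bigr => k _; exact: phi1Z.
have OLM c : OL c%:A -> OM c.
  move=> Hc.
  have [d [d0 [OMd Hd]]] := @common_den _ _ HMs HMf [seq phi1 (b k) | k <- enum 'I_nb].
  apply: (@almost_int _ _ HMs HMn HMic HMf c d d0) => n.
  have : OL (c ^+ n)%:A by rewrite algXn; apply: (RX HLs).
  move=> /Hgen [e [He Ee]].
  have -> : c ^+ n = \sum_k e k * phi1 (b k).
    by rewrite -phi1_sum -Ee phi1Z phi11 mulr1.
  rewrite mulr_sumr; apply: (Rsum HMs) => k _; rewrite mulrCA; apply: (RM HMs) => //.
  apply: Hd; apply: map_f; exact: mem_enum.
split.
  move=> I HI [i0 [Ii0 i00]] x; split.
  - move=> [a [y [OMa [[n [i [bb [Hi [Hbb Ey]]]]] ->]]]].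
    have OMi k : OM (i k) := JR HI _ (Hi k).
    split.
      apply: (RD HLs); first exact: HML.
      by rewrite Ey; apply: OLsum.
    exists n, i, (fun k => ATr (bb k)); split=> //; split.
      by move=> k; exists (bb k).
    by rewrite ATrD ATrC add0r Ey ATr_sum.
  - move=> [OLx [n [i [aa [Hi [Haa E]]]]]].
    have [yk Hyk] := fin_all_exists Haa.
    have OMi k : OM (i k) := JR HI _ (Hi k).
    pose y := \sum_k i k *: yk k.
    have OLy : OL y by apply: OLsum => // k; case: (Hyk k).
    have Efix : sigma (x - y) = x - y.
      have H : ATr x = ATr y.
        rewrite E /y ATr_sum; apply: eq_bigr => k _; by case: (Hyk k) => _ ->.
      move: H; rewrite /ATr rmorphB => H; apply/eqP; rewrite -subr_eq0; apply/eqP.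
      transitivity ((y - sigma y) - (x - sigma x)); first by ring.
      by rewrite H subrr.
    have [c Ec] := fixd _ Efix.
    exists c, y; split.
      by apply: OLM; rewrite -Ec; apply: (RB HLs).
    split; last by rewrite -Ec subrK.
    exists n, i, yk; split=> //; split=> // k; by case: (Hyk k).
have AD x y : A x -> A y -> A (x + y).
  move=> [u [Ou ->]] [v [Ov ->]]; exists (u + v); split; [exact: (RD HLs) | by rewrite ATrD].
have A0 : A 0 by exists 0; split; [exact: (R0 HLs) | by rewrite /ATr rmorph0 subr0].
have AZ r x : OM r -> A x -> A (r *: x).
  move=> Or [u [Ou ->]]; exists (r *: u); split; [exact: OLZ | by rewrite ATrZ].
split; last first.
  exists del; split; first by exists t0.
  by split=> // x [y [_ ->]]; exact: ATr_del y.
have [be Hbe] := fin_all_exists (fun k => ATr_del (b k)).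
have [d [d0 [OMd Hd]]] := @common_den _ _ HMs HMf [seq be k | k <- enum 'I_nb].
have Hdbe k : OM (d * be k) by apply: Hd; apply: map_f; exact: mem_enum.
pose del' := d^-1 *: del.
have del'0 : del' != 0 by rewrite scaler_eq0 invr_eq0 negb_or d0 del0.
have Edel : del = d *: del' by rewrite /del' scalerA divff // scale1r.
have HA x : A x -> exists c, x = c *: del'.
  move=> [y [_ ->]]; have [e ->] := ATr_del y; exists (e * d); by rewrite Edel scalerA.
have Acoef c : A (c *: del') -> OM c.
  move=> [y [OLy Ey]].
  have [e [He Ee]] := Hgen _ OLy.
  have : c *: del' = (\sum_k e k * (d * be k)) *: del'.
    rewrite Ey Ee ATr_sum scaler_suml; apply: eq_bigr => k _.
    by rewrite Hbe Edel !scalerA [d * be k]mulrC mulrA.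
  move/eqP; rewrite -subr_eq0 -scalerBl scaler_eq0 (negbTE del'0) orbF subr_eq0 => /eqP ->.
  by apply: (Rsum HMs) => k _; apply: (RM HMs).
pose J0 c := A (c *: del').
have HJ0 : is_ideal OM J0.
  split.
  - exact: Acoef.
  - by rewrite /J0 scale0r.
  - by move=> u v Ju Jv; rewrite /J0 scalerDl; apply: AD.
  - by move=> r u Or Ju; rewrite /J0 -scalerA; apply: AZ.
have nzJ0 : nz M J0 by exists d; split=> //; rewrite /J0 -Edel; exists t0.
have [s [Hs Hsum]] := @all_inv _ _ HMs HMn HMic HMf HMd J0 HJ0 nzJ0.
have [phi [phiD phiZ phid]] := @functional M L del' del'0.
exists (size s), (fun x k => (nth (0,0) s k).1 * phi x),
  (fun v => \sum_(k < size s) (v k * (nth (0,0) s k).2) *: del').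
have Hnth (k : 'I_(size s)) := Hs _ (mem_nth (0,0) (ltn_ord k)).
split; [|split; [|split; [|split; [|split; [|split]]]]].
- move=> x Ax k; have [c Ec] := HA x Ax; rewrite Ec phiZ phid mulr1.
  by apply: (Hnth k).2; rewrite /J0 -Ec.
- move=> v Hv; apply: (big_ind A) => // k _.
  by rewrite -scalerA; apply: AZ => //; exact: (Hnth k).1.
- by move=> x y _ _; apply: functional_extensionality => k; rewrite phiD mulrDr.
- by move=> c x _ _; apply: functional_extensionality => k; rewrite phiZ mulrCA.
- by move=> v w _ _; rewrite -big_split; apply: eq_bigr => k _; rewrite mulrDl scalerDl.
- by move=> c v _ _; rewrite scaler_sumr; apply: eq_bigr => k _; rewrite /del' !scalerA !mulrA.
- move=> x Ax; have [c Ec] := HA x Ax; rewrite Ec phiZ phid mulr1 -scaler_suml.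
  congr (_ *: _).
  transitivity (c * \sum_(t <- s) t.1 * t.2); last by rewrite Hsum mulr1.
  rewrite (big_nth (0,0)) big_mkord mulr_sumr; apply: eq_bigr => k _.
  by rewrite mulrCA mulrA.
Qed.
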